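(* Let $\xi<-6$. There exists $\phi_0\in(0,\pi/4]$ such that for every $\phi\in(0,\phi_0]$ there is $c=c(\xi,\phi)>0$ such that for $z=u+\mathrm{i}v$, $$\operatorname{Re}[2\mathrm{i}\theta(z)]\ge c|v|\ \text{ for } z\in\Omega_{01}\cup\Omega_{02},\qquad \operatorname{Re}[2\mathrm{i}\theta(z)]\le -c|v|\ \text{ for } z\in\Omega_{03}\cup\Omega_{04}.$$
   Context: $\theta(z)=\frac12(z+z^{-1})\big[\xi-2+(z-z^{-1})^2\big]$. For $\xi<-6$ let $\zeta_1=\sqrt{(-\xi-\sqrt{\xi^2-36})/6}\in(0,1)$. With $z=u+\mathrm{i}v$: $\Omega_{01}=\{0<u<\zeta_1/2,\ 0<v<u\tan\phi\}$, $\Omega_{02}=\{-\zeta_1/2<u<0,\ 0<v<|u|\tan\phi\}$, $\Omega_{03}=\{-\zeta_1/2<u<0,\ -|u|\tan\phi<v<0\}$, $\Omega_{04}=\{0<u<\zeta_1/2,\ -u\tan\phi<v<0\}$. *)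

(* Defs.v *)
From Stdlib Require Import Reals Lra.
From Coquelicot Require Import Coquelicot.
Open Scope R_scope.

Definition theta (xi : R) (z : C) : C :=
  (/ 2 * (z + / z) * (RtoC xi - 2 + (z - / z) * (z - / z)))%C.

Definition zeta1 (xi : R) : R := sqrt ((- xi - sqrt (xi ^ 2 - 36)) / 6).

Definition Omega01 (xi phi : R) (z : C) : Prop :=
  0 < Re z < zeta1 xi / 2 /\ 0 < Im z < Re z * tan phi.
Definition Omega02 (xi phi : R) (z : C) : Prop :=
  - (zeta1 xi / 2) < Re z < 0 /\ 0 < Im z < Rabs (Re z) * tan phi.
Definition Omega03 (xi phi : R) (z : C) : Prop :=
  - (zeta1 xi / 2) < Re z < 0 /\ - (Rabs (Re z) * tan phi) < Im z < 0.
Definition Omega04 (xi phi : R) (z : C) : Prop :=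
  0 < Re z < zeta1 xi / 2 /\ - (Re z * tan phi) < Im z < 0.

(* Main.v *)
Require Import Defs.
From Stdlib Require Import Reals Lra Psatz.
From Coquelicot Require Import Coquelicot.
Open Scope R_scope.
Lemma reform xi u v : u <> 0 ->
  let r := u*u+v*v in
  Re (2 * Ci * theta xi (u,v))%C = v * ((/r - 1) * ((xi-6) + 3*(u*u)*(1+/r)^2 - (v*v)*(1-/r)^2)).
Proof.
intros Hu r. assert (Hr: r <> 0). { unfold r. nra. }
unfold theta. unfold Re, Ci, RtoC, Cmult, Cplus, Cminus, Copp, Cinv; simpl.
unfold r in *. field. auto.
Qed.

Lemma core xi S T u v : xi < -6 -> 0 < S < 1 -> 3*S*S + xi*S + 3 = 0 ->
  0 < u*u < S/4 -> v*v <= T*(u*u) -> 0 <= T <= 1 ->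
  T*(3*(6-xi)+1) <= (3*S/4)*(-xi-6)/2 ->
  let r := u*u+v*v in
  (3*S/4)*(-xi-6)/2 <= (/r - 1) * ((xi-6) + 3*(u*u)*(1+/r)^2 - (v*v)*(1-/r)^2).
Proof.
intros Hxi HS HSq Hu Hv HT HTm r.
assert (Hrdef : r = u*u + v*v) by reflexivity. clearbody r.
set (s := u*u) in *. assert (Hv0 : 0 <= v*v) by (apply Rle_0_sqr).
set (w := v*v) in *. clearbody s w.
set (m := (3*S/4)*(-xi-6)/2). assert (Hmdef : m = (3*S/4)*(-xi-6)/2) by reflexivity. clearbody m.
assert (Hs1 : s < 1/4) by lra.
assert (Hr1 : s <= r) by lra.
assert (Hr2 : r <= 2*s) by nra.
assert (Hr0 : 0 < r) by lra.
assert (Hq : 3*s*s + xi*s + 3 >= 2*m).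
{ assert (E: 3*s*s + xi*s + 3 = (S-s)*(-xi-3*(s+S))).
  { assert (3*s*s + xi*s + 3 = 3*s*s + xi*s + 3 - (3*S*S + xi*S + 3)) by lra. rewrite H. ring. }
  rewrite E. rewrite Hmdef. apply Rle_ge.
  apply Rle_trans with ((3*S/4)*(-xi-6)); [lra|].
  apply Rmult_le_compat; lra. }
remember ((xi-6)*r*r + 3*s*(r+1)^2 - w*(1-r)^2) as P eqn:HPdef.
assert (Hm : 0 < m) by (rewrite Hmdef; nra).
assert (HP : P >= s*m).
{ assert (B1 : r <= s*(1+T)) by nra.
  assert (B2 : r*r <= (s*(1+T))*(s*(1+T))) by (apply Rmult_le_compat; lra).
  assert (A1 : (xi-6)*(r*r) >= (xi-6)*((s*(1+T))*(s*(1+T)))).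
  { apply Rle_ge, Rmult_le_compat_neg_l; lra. }
  assert (A2 : 3*s*(r+1)^2 >= 3*s*(1+s)^2).
  { assert ((1+s)^2 <= (r+1)^2) by (simpl; apply Rmult_le_compat; lra).
    apply Rle_ge. rewrite !Rmult_assoc. apply Rmult_le_compat_l; [lra|]. apply Rmult_le_compat_l; lra. }
  assert (A3 : w*(1-r)^2 <= T*s).
  { assert ((1-r)^2 <= 1) by (simpl; nra).
    apply Rle_trans with (w*1); [apply Rmult_le_compat_l; lra| lra]. }
  assert (A4 : s*(2*T+T*T) <= 3*T).
  { apply Rle_trans with (1*(2*T+T*T)); [apply Rmult_le_compat_r; nra| nra]. }
  assert (A5 : (xi-6)*(s*(2*T+T*T)) >= (xi-6)*(3*T)).
  { apply Rle_ge, Rmult_le_compat_neg_l; lra. }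
  assert (E1 : P = (xi-6)*(r*r) + 3*s*(r+1)^2 - w*(1-r)^2) by (rewrite HPdef; ring).
  assert (E2 : (xi-6)*((s*(1+T))*(s*(1+T))) + 3*s*(1+s)^2 - T*s
     = s*((3*s*s+xi*s+3) + (xi-6)*(s*(2*T+T*T)) - T)) by ring.
  assert (A6 : (3*s*s+xi*s+3) + (xi-6)*(s*(2*T+T*T)) - T >= m) by lra.
  assert (A7 : s*((3*s*s+xi*s+3) + (xi-6)*(s*(2*T+T*T)) - T) >= s*m).
  { apply Rle_ge, Rmult_le_compat_l; lra. }
  lra. }
assert (HE : (xi-6) + 3*s*(1+/r)^2 - w*(1-/r)^2 = P / (r*r)).
{ rewrite HPdef. field. lra. }
rewrite HE.
assert (HPr : P/(r*r) >= m).
{ apply Rle_ge. apply Rmult_le_reg_r with (r*r); [nra|].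
  unfold Rdiv. rewrite Rmult_assoc, Rinv_l by nra.
  apply Rle_trans with (s*m); [|lra].
  apply Rle_trans with (4*s*s*m).
  { assert (r*r <= 4*s*s) by (apply Rle_trans with ((2*s)*(2*s)); [apply Rmult_le_compat; lra| lra]).
    rewrite (Rmult_comm (4*s*s) m). apply Rmult_le_compat_l; lra. }
  assert (4*s*s <= s) by nra.
  rewrite (Rmult_comm (4*s*s) m), (Rmult_comm s m). apply Rmult_le_compat_l; lra. }
assert (Hinv : /r - 1 >= 1).
{ assert (/r >= 2). { apply Rle_ge. apply Rmult_le_reg_r with r; [lra|]. rewrite Rinv_l by lra. lra. }
  lra. }
apply Rle_trans with (1*m); [lra|]. apply Rmult_le_compat; lra.
Qed.

Lemma key xi S T u v : xi < -6 -> 0 < S < 1 -> 3*S*S + xi*S + 3 = 0 ->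
  0 < u*u < S/4 -> v*v <= T*(u*u) -> 0 <= T <= 1 ->
  T*(3*(6-xi)+1) <= (3*S/4)*(-xi-6)/2 ->
  exists X, (3*S/4)*(-xi-6)/2 <= X /\ Re (2 * Ci * theta xi (u,v))%C = v * X.
Proof.
intros. eexists; split; [apply (core xi S T u v); auto|].
apply reform. intro; subst; lra.
Qed.

Theorem mainTheorem4 (xi : R) (hxi : xi < -6) :
  exists phi0 : R, 0 < phi0 <= PI / 4 /\
    forall phi : R, 0 < phi <= phi0 ->
      exists c : R, 0 < c /\
        (forall z : C, Omega01 xi phi z \/ Omega02 xi phi z ->
           Re (2 * Ci * theta xi z)%C >= c * Rabs (Im z)) /\
        (forall z : C, Omega03 xi phi z \/ Omega04 xi phi z ->
           Re (2 * Ci * theta xi z)%C <= - (c * Rabs (Im z))).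
Proof.
set (Q := sqrt (xi^2 - 36)).
assert (HQ0 : 0 <= Q) by apply sqrt_pos.
assert (HQ2 : Q*Q = xi^2 - 36) by (apply sqrt_sqrt; nra).
set (S := (- xi - Q) / 6).
assert (HS0 : 0 < S) by (unfold S; nra).
assert (HS1 : S < 1) by (unfold S; nra).
assert (HSq : 3*S*S + xi*S + 3 = 0).
{ unfold S. replace (3 * ((- xi - Q) / 6) * ((- xi - Q) / 6) + xi * ((- xi - Q) / 6) + 3)
  with ((Q*Q - (xi^2 - 36))/12) by field. rewrite HQ2. field. }
assert (Hz : zeta1 xi = sqrt S) by reflexivity.
set (q := sqrt S) in Hz.
assert (Hq0 : 0 <= q) by apply sqrt_pos.
assert (Hq2 : q*q = S) by (apply sqrt_sqrt; lra).
set (m := (3*S/4)*(-xi-6)/2).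
assert (Hm : 0 < m) by (unfold m; nra).
set (K := 3*(6-xi)+1).
assert (HK : 0 < K) by (unfold K; lra).
set (t0 := Rmin 1 (m / K)).
assert (Ht0 : 0 < t0 <= 1).
{ unfold t0. split; [apply Rmin_glb_lt; [lra| apply Rdiv_lt_0_compat; lra] | apply Rmin_l]. }
assert (Ht0K : t0 * K <= m).
{ apply Rle_trans with (m / K * K). apply Rmult_le_compat_r; [lra| apply Rmin_r].
  right; field; lra. }
pose proof (atan_bound t0) as Hab.
assert (HPI : 0 < PI) by apply PI_RGT_0.
exists (atan t0). split.
{ split. rewrite <- atan_0. apply atan_increasing; lra.
  rewrite <- atan_1. destruct (Rle_lt_or_eq_dec t0 1 (proj2 Ht0)) as [h|h].
  left; apply atan_increasing; lra. rewrite h; lra. }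
intros phi Hphi.
set (t := tan phi).
assert (Ht : 0 < t <= t0).
{ split.
  - unfold t. rewrite <- tan_0. apply tan_increasing; lra.
  - destruct (Rle_lt_or_eq_dec phi (atan t0) (proj2 Hphi)) as [h|h].
    + left. rewrite <- (tan_atan t0). apply tan_increasing; lra.
    + unfold t; rewrite h, tan_atan; lra. }
set (T := t*t).
assert (HT : 0 <= T <= 1) by (unfold T; nra).
assert (HTK : T * K <= m).
{ apply Rle_trans with (t0*K); [|lra]. apply Rmult_le_compat_r; [lra|]. unfold T; nra. }
exists m. split; [exact Hm|]. split.
- intros [u v] Hz'. simpl in Hz'.
  destruct Hz' as [[Hu Hv]|[Hu Hv]]; rewrite Hz in Hu; change (Im (u,v)) with v; cbn [Re Im fst snd] in Hu; cbn [Re Im fst snd] in Hv; fold t in Hv.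
  + assert (H1 : 0 < u*u < S/4) by (split; nra).
    assert (H2 : v*v <= T*(u*u)) by (unfold T; nra).
    destruct (key xi S T u v) as [X [HX E]]; auto; try lra; fold m in HX.
    rewrite E, Rabs_pos_eq by lra. apply Rle_ge; rewrite (Rmult_comm m v); apply Rmult_le_compat_l; lra.
  + rewrite Rabs_left in Hv by lra.
    assert (H1 : 0 < u*u < S/4) by (split; nra).
    assert (H2 : v*v <= T*(u*u)) by (unfold T; nra).
    destruct (key xi S T u v) as [X [HX E]]; auto; try lra; fold m in HX.
    rewrite E, Rabs_pos_eq by lra. apply Rle_ge; rewrite (Rmult_comm m v); apply Rmult_le_compat_l; lra.
- intros [u v] Hz'. simpl in Hz'.
  destruct Hz' as [[Hu Hv]|[Hu Hv]]; rewrite Hz in Hu; change (Im (u,v)) with v; cbn [Re Im fst snd] in Hu; cbn [Re Im fst snd] in Hv; fold t in Hv.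
  + rewrite Rabs_left in Hv by lra.
    assert (H1 : 0 < u*u < S/4) by (split; nra).
    assert (H2 : v*v <= T*(u*u)) by (unfold T; nra).
    destruct (key xi S T u v) as [X [HX E]]; auto; try lra; fold m in HX.
    rewrite E, Rabs_left by lra. replace (-(m*-v)) with (v*m) by ring; apply Rmult_le_compat_neg_l; lra.
  + assert (H1 : 0 < u*u < S/4) by (split; nra).
    assert (H2 : v*v <= T*(u*u)) by (unfold T; nra).
    destruct (key xi S T u v) as [X [HX E]]; auto; try lra; fold m in HX.
    rewrite E, Rabs_left by lra. replace (-(m*-v)) with (v*m) by ring; apply Rmult_le_compat_neg_l; lra.
Qed.
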